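(* Assume: (A1) $f(x,y)$ and each component of $g(x,y)$ are convex in $y$ for each fixed $x$, and $f,g$ are twice continuously differentiable; (A2) $Y\subseteq\mathbb{R}^m$ is a compact convex set with $\{y:\exists x\in X \text{ such that } g(x,y)\le 0\}\subseteq\mathrm{int}(Y)$; (A3) $F$ and $G$ are twice continuously differentiable; (R1) for each $x\in X$ there exists $y$ with $g(x,y)<0$; (R2) $X$ is compact and nonempty, and the constraint set $\{x:G(x)\le0\}$ satisfies MFCQ at each $x\in X$. Let $\overline{\epsilon}\ge0$. Then, as $\epsilon\downarrow\overline{\epsilon}$, $\mu\downarrow0$ and $z\downarrow0$, $\limsup_{\epsilon\downarrow\overline{\epsilon},\mu\downarrow0,z\downarrow0}\big(z\text{-}\arg\min\mathsf{DBP}(\epsilon,\mu)\big)\subseteq\arg\min\mathsf{DBP}(\overline{\epsilon},0)$, and $z\text{-}\min\mathsf{DBP}(\epsilon,\mu)\to\min\mathsf{DBP}(\overline{\epsilon},0)$.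
   Context: Let $F:\mathbb{R}^n\times\mathbb{R}^m\to\mathbb{R}$, $f:\mathbb{R}^n\times\mathbb{R}^m\to\mathbb{R}$, $g:\mathbb{R}^n\times\mathbb{R}^m\to\mathbb{R}^p$, $G:\mathbb{R}^n\to\mathbb{R}^q$; vector inequalities componentwise; $X=\{x:G(x)\le0\}$; MFCQ for $\{x:G(x)\le0\}$ at $x$ means there is $d$ with $\nabla G_i(x)^{\mathsf T}d<0$ for all active indices $i$. For $\mu\ge0$, $h_\mu(\lambda,x)=\min_y\{\mu\|y\|^2+f(x,y)+\lambda^{\mathsf T}g(x,y):y\in Y\}$ with $Y$ from (A2); $\mathcal{C}(\epsilon,\mu)=\{(x,y,\lambda): G(x)\le0,\ g(x,y)\le\epsilon,\ \lambda\ge0,\ f(x,y)-h_\mu(\lambda,x)\le\epsilon\}$; $\mathsf{DBP}(\epsilon,\mu)$ is the problem of minimizing $F(x,y)$ over $(x,y,\lambda)\in\mathcal{C}(\epsilon,\mu)$. $z\text{-}\arg\min\mathsf{DBP}(\epsilon,\mu)$ is the set of feasible $(x,y,\lambda)$ with $F(x,y)\le\inf\mathsf{DBP}(\epsilon,\mu)+z$, and $z\text{-}\min\mathsf{DBP}(\epsilon,\mu)$ denotes the objective value at such points (any value in $[\inf, \inf+z]$ attained there). $\limsup$ of sets is the Painlevé–Kuratowski outer limit: the set of all cluster points of sequences of elements of the sets along the parameter sequence. *)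

(* Defs.v *)
From HB Require Import structures.
From mathcomp Require Import all_boot all_order all_algebra.
From mathcomp Require Import all_classical all_reals all_analysis.
Set Implicit Arguments. Unset Strict Implicit. Unset Printing Implicit Defensive.
Import Order.TTheory GRing.Theory Num.Theory.
Import numFieldNormedType.Exports.
Local Open Scope classical_set_scope.
Local Open Scope ring_scope.

Section Defs.
Variable R : realType.

Definition evec (N : nat) (i : 'I_N) : 'rV[R]_N := delta_mx 0 i.

Definition dotv (N : nat) (u v : 'rV[R]_N) : R := \sum_(j < N) u 0 j * v 0 j.
Definition sqnorm (N : nat) (u : 'rV[R]_N) : R := dotv u u.

Definition grad (N : nat) (h : 'rV[R]_N -> R) (x : 'rV[R]_N) : 'rV[R]_N :=
  \row_(j < N) 'D_(evec j) h x.

Definition C2 (N : nat) (h : 'rV[R]_N -> R) : Prop :=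
  continuous h /\
  forall i j : 'I_N,
    (forall x, derivable h x (evec i)) /\
    continuous (fun x => 'D_(evec i) h x) /\
    (forall x, derivable (fun y => 'D_(evec i) h y) x (evec j)) /\
    continuous (fun x => 'D_(evec j) (fun y => 'D_(evec i) h y) x).

Definition C2vec (N K : nat) (h : 'rV[R]_N -> 'rV[R]_K) : Prop :=
  forall k : 'I_K, C2 (fun x => h x 0 k).

Definition convex_fun (N : nat) (h : 'rV[R]_N -> R) : Prop :=
  forall (y1 y2 : 'rV[R]_N) (t : R), 0 <= t <= 1 ->
    h (t *: y1 + (1 - t) *: y2) <= t * h y1 + (1 - t) * h y2.

Definition Xset (n q : nat) (G : 'rV[R]_n -> 'rV[R]_q) : set 'rV[R]_n :=
  [set x | forall i : 'I_q, G x 0 i <= 0].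

Definition MFCQ (n q : nat) (G : 'rV[R]_n -> 'rV[R]_q) (x : 'rV[R]_n) : Prop :=
  exists d : 'rV[R]_n, forall i : 'I_q, G x 0 i = 0 ->
    dotv (grad (fun x' => G x' 0 i) x) d < 0.

Variables (n m p q : nat).
Variables (F f : 'rV[R]_(n + m) -> R) (g : 'rV[R]_(n + m) -> 'rV[R]_p)
          (G : 'rV[R]_n -> 'rV[R]_q) (Y : set 'rV[R]_m).

(* h_mu(lambda, x) = min_{y in Y} mu |y|^2 + f(x,y) + lambda^T g(x,y)
   (stated as an infimum in the extended reals) *)
Definition h_mu (mu : R) (lam : 'rV[R]_p) (x : 'rV[R]_n) : \bar R :=
  ereal_inf [set (mu * sqnorm y + f (row_mx x y) + dotv lam (g (row_mx x y)))%:E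
            | y in Y].

Definition dbpt := ('rV[R]_n * 'rV[R]_m * 'rV[R]_p)%type.

Definition Cset (eps mu : R) : set dbpt :=
  [set pt : dbpt | let: (x, y, lam) := pt in
     (forall i : 'I_q, G x 0 i <= 0) /\
     (forall i : 'I_p, g (row_mx x y) 0 i <= eps) /\
     (forall i : 'I_p, 0 <= lam 0 i) /\
     ((f (row_mx x y))%:E - h_mu mu lam x <= eps%:E)%E].

Definition Fval (pt : dbpt) : R := let: (x, y, _) := pt in F (row_mx x y).

Definition dbp_inf (eps mu : R) : \bar R := ereal_inf [set (Fval pt)%:E | pt in Cset eps mu].

Definition dbp_zargmin (eps mu z : R) : set dbpt :=
  [set pt | Cset eps mu pt /\ ((Fval pt)%:E <= dbp_inf eps mu + z%:E)%E].

Definition dbp_argmin (eps mu : R) : set dbpt :=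
  [set pt | Cset eps mu pt /\ (Fval pt)%:E = dbp_inf eps mu].

End Defs.

(* Main.v *)
Require Import Defs.
From HB Require Import structures.
From mathcomp Require Import all_boot all_order all_algebra.
From mathcomp Require Import all_classical all_reals all_analysis.
From mathcomp Require Import lra.
Import Order.TTheory GRing.Theory Num.Theory.
Import numFieldNormedType.Exports.
Local Open Scope classical_set_scope.
Local Open Scope ring_scope.
Set Implicit Arguments. Unset Strict Implicit. Unset Printing Implicit Defensive.
Section Gen.
Variable R : realType.

Lemma mx_cont (T : topologicalType) a b (h : T -> 'M[R]_(a, b)) :
  (forall i j, continuous (fun t => h t i j)) -> continuous h.
Proof.
move=> hc t; apply/cvg_mx_entourageP => A entA.
apply: filter_forall => i. apply: filter_forall => j.
have H : \forall s \near t, A (h t i j, h s i j).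
  by have /cvg_entourageP := hc i j t; apply.
by apply: filterS H => s /= ?; rewrite inE.
Qed.

Lemma rowmx_cont a b : continuous (fun w : 'rV[R]_a * 'rV[R]_b => row_mx w.1 w.2).
Proof.
apply: mx_cont => i j; rewrite (ord1 i).
case: (split_ordP j) => k ->.
- have -> : (fun t : 'rV[R]_a * 'rV[R]_b => row_mx t.1 t.2 0 (lshift b k)) = (fun t => t.1 0 k).
    by apply/funext => t; rewrite row_mxEl.
  move=> t; apply: (@continuous_comp _ _ _ fst (fun M : 'rV[R]_a => M 0 k)); [exact: cvg_fst | exact: coord_continuous].
- have -> : (fun t : 'rV[R]_a * 'rV[R]_b => row_mx t.1 t.2 0 (rshift a k)) = (fun t => t.2 0 k).
    by apply/funext => t; rewrite row_mxEr.
  move=> t; apply: (@continuous_comp _ _ _ snd (fun M : 'rV[R]_b => M 0 k)); [exact: cvg_snd | exact: coord_continuous].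
Qed.

Lemma contc (T U V : topologicalType) {u : T -> U} {v : U -> V} :
  continuous u -> continuous v -> continuous (fun t => v (u t)).
Proof. by move=> cu cv t; apply: (@continuous_comp _ _ _ u v); [exact: cu|exact: cv]. Qed.

Lemma cont_fst (T U : topologicalType) : continuous (@fst T U).
Proof. by move=> t; exact: cvg_fst. Qed.

Lemma cont_snd (T U : topologicalType) : continuous (@snd T U).
Proof. by move=> t; exact: cvg_snd. Qed.

Lemma cont_pair (T U V : topologicalType) (u : T -> U) (v : T -> V) :
  continuous u -> continuous v -> continuous (fun t => (u t, v t)).
Proof. by move=> cu cv t; apply: cvg_pair; [exact: cu|exact: cv]. Qed.

Lemma cont_row (T : topologicalType) a b (u : T -> 'rV[R]_a) (v : T -> 'rV[R]_b) :
  continuous u -> continuous v -> continuous (fun t => row_mx (u t) (v t)).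
Proof.
move=> cu cv; apply: (@contc _ _ _ (fun t => (u t, v t)) (fun w : 'rV[R]_a * 'rV[R]_b => row_mx w.1 w.2)).
  exact: cont_pair.
exact: rowmx_cont.
Qed.

Lemma cont_coord (T : topologicalType) a (u : T -> 'rV[R]_a) j :
  continuous u -> continuous (fun t => u t 0 j).
Proof. by move=> cu; apply: (@contc _ _ _ u (fun M : 'rV[R]_a => M 0 j)) => //; exact: coord_continuous. Qed.

Lemma cont_add (T : topologicalType) (u v : T -> R) :
  continuous u -> continuous v -> continuous (fun t => u t + v t).
Proof. by move=> cu cv t; apply: continuousD; [exact: cu|exact: cv]. Qed.

Lemma cont_sub (T : topologicalType) (u v : T -> R) :
  continuous u -> continuous v -> continuous (fun t => u t - v t).
Proof. by move=> cu cv t; apply: continuousB; [exact: cu|exact: cv]. Qed.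

Lemma cont_mul (T : topologicalType) (u v : T -> R) :
  continuous u -> continuous v -> continuous (fun t => u t * v t).
Proof. by move=> cu cv t; apply: continuousM; [exact: cu|exact: cv]. Qed.

Lemma cont_cst (T : topologicalType) (c : R) : continuous (fun _ : T => c).
Proof. exact: cst_continuous. Qed.

Lemma cont_sum (T : topologicalType) N (u : 'I_N -> T -> R) :
  (forall j, continuous (u j)) -> continuous (fun t => \sum_(j < N) u j t).
Proof.
move=> cu.
suff H : forall s : seq 'I_N, continuous (fun t => \sum_(j <- s) u j t) by exact: H.
elim=> [|a s IH].
  under eq_fun do rewrite big_nil; exact: cont_cst.
under eq_fun do rewrite big_cons; exact: cont_add.
Qed.

Lemma closed_le_cont (T : topologicalType) (u v : T -> R) :
  continuous u -> continuous v -> closed [set t | u t <= v t].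
Proof.
move=> cu cv.
have -> : [set t | u t <= v t] = (fun t => v t - u t) @^-1` [set x : R | 0 <= x].
  by apply/seteqP; split => t /=; rewrite subr_ge0.
apply: preimage_closed; last exact: closed_ge.
by move=> t _; exact: (cont_sub cv cu).
Qed.

Lemma cont_bound (T : topologicalType) (A : set T) (u : T -> R) :
  compact A -> continuous u -> exists M, forall a, A a -> u a <= M.
Proof.
move=> cA cu.
have cI : compact (u @` A) by apply: continuous_compact => //; exact: continuous_subspaceT.
case: (compact_bounded cI) => M [Mr HM].
exists (M + 1) => a Aa.
have := HM (M + 1) ltac:(by rewrite ltrDl) (u a) (ex_intro2 _ _ a Aa erefl).
by move=> /= H; apply: le_trans H; exact: ler_norm.
Qed.

End Gen.
Section Main.
Variables (R : realType) (n m p q : nat).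
Variables (F f : 'rV[R]_(n + m) -> R) (g : 'rV[R]_(n + m) -> 'rV[R]_p)
  (G : 'rV[R]_n -> 'rV[R]_q) (Y : set 'rV[R]_m).
Hypothesis cF : continuous F.
Hypothesis cf : continuous f.
Hypothesis cg : forall i, continuous (fun v => g v 0 i).
Hypothesis cG : forall i, continuous (fun x => G x 0 i).

Definition lag (mu : R) (lam : 'rV[R]_p) (x : 'rV[R]_n) (y' : 'rV[R]_m) : R :=
  mu * sqnorm y' + f (row_mx x y') + dotv lam (g (row_mx x y')).

Lemma lagr_iff x y lam e mu :
  ((f (row_mx x y))%:E - h_mu f g Y mu lam x <= e%:E)%E <->
  (forall y', Y y' -> f (row_mx x y) - e <= lag mu lam x y').
Proof.
rewrite /h_mu; set S := [set _ | _ in _].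
have E1 : ((f (row_mx x y))%:E - ereal_inf S <= e%:E)%E <-> ((f (row_mx x y) - e)%:E <= ereal_inf S)%E.
  case: (ereal_inf S) => [r| |] /=.
  - by rewrite !lee_fin; split => ?; lra.
  - by rewrite addeNy leNye leey.
  - by rewrite addey // leye_eq leeNy_eq.
rewrite E1; split.
- move=> /ereal_infP H y' Yy'; rewrite -lee_fin; apply: H; exists y' => //.
- move=> H; apply/ereal_infP => _ [y' Yy' <-]; rewrite lee_fin; exact: H.
Qed.

Lemma sqnorm_ge0 N (u : 'rV[R]_N) : 0 <= sqnorm u.
Proof. by rewrite /sqnorm /dotv; apply: sumr_ge0 => j _; rewrite -expr2 sqr_ge0. Qed.

Lemma cont_lag (T : topologicalType) (mu : T -> R) (lam : T -> 'rV[R]_p) (x : T -> 'rV[R]_n) y' :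
  continuous mu -> continuous lam -> continuous x ->
  continuous (fun t => lag (mu t) (lam t) (x t) y').
Proof.
move=> cmu clam cx; rewrite /lag /dotv.
have cr : continuous (fun t => row_mx (x t) y') by apply: cont_row => //; exact: cst_continuous.
apply: cont_add; first apply: cont_add.
- by apply: cont_mul => //; exact: cont_cst.
- exact: (contc cr cf).
- apply: cont_sum => j; apply: cont_mul; first exact: cont_coord.
  by move=> t; apply: (@continuous_comp _ _ _ (fun t => row_mx (x t) y') (fun v => g v 0 j) t (cr t)); exact: cg.
Qed.

Definition Gr : set ((R * R) * dbpt R n m p) :=
  [set w | Cset f g G Y w.1.1 w.1.2 w.2].

Lemma Gr_closed : closed Gr.
Proof.
have key : forall S, closed S -> Gr `<=` S -> closure Gr `<=` S.
  move=> S cS GS w /(closureS GS); by move/closure_id: cS => <-.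
have c11 : continuous (fun w : (R * R) * dbpt R n m p => w.1.1).
  exact: (contc (@cont_fst _ _) (@cont_fst _ _)).
have c12 : continuous (fun w : (R * R) * dbpt R n m p => w.1.2).
  exact: (contc (@cont_fst _ _) (@cont_snd _ _)).
have cx : continuous (fun w : (R * R) * dbpt R n m p => w.2.1.1).
  exact: (contc (@cont_snd _ _) (contc (@cont_fst _ _) (@cont_fst _ _))).
have cy : continuous (fun w : (R * R) * dbpt R n m p => w.2.1.2).
  exact: (contc (@cont_snd _ _) (contc (@cont_fst _ _) (@cont_snd _ _))).
have cl : continuous (fun w : (R * R) * dbpt R n m p => w.2.2).
  exact: (contc (@cont_snd _ _) (@cont_snd _ _)).
have cxy : continuous (fun w : (R * R) * dbpt R n m p => row_mx w.2.1.1 w.2.1.2).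
  exact: cont_row.
move=> [[e mu] [[x y] lam]] Hw; rewrite /Gr /=.
split; [|split; [|split]].
- move=> i; apply: (key [set w | G w.2.1.1 0 i <= 0]) Hw.
    apply: closed_le_cont; [by move=> w; apply: (@continuous_comp _ _ _ (fun w : (R * R) * dbpt R n m p => w.2.1.1) (fun x => G x 0 i) w (cx w)); exact: cG|exact: cont_cst].
  by move=> [[e' mu'] [[x' y'] lam']] [/= + _]; apply.
- move=> i; apply: (key [set w | g (row_mx w.2.1.1 w.2.1.2) 0 i <= w.1.1]) Hw.
    apply: closed_le_cont => //; by move=> w; apply: (@continuous_comp _ _ _ (fun w : (R * R) * dbpt R n m p => row_mx w.2.1.1 w.2.1.2) (fun v => g v 0 i) w (cxy w)); exact: cg.
  by move=> [[e' mu'] [[x' y'] lam']] [/= _ [+ _]]; apply.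
- move=> i; apply: (key [set w : (R * R) * dbpt R n m p | 0 <= w.2.2 0 i]) Hw.
    by apply: closed_le_cont; [exact: cont_cst|exact: cont_coord].
  by move=> [[e' mu'] [[x' y'] lam']] [/= _ [_ [+ _]]]; apply.
- apply/lagr_iff => y'' Yy''.
  apply: (key [set w | f (row_mx w.2.1.1 w.2.1.2) - w.1.1 <= lag w.1.2 w.2.2 w.2.1.1 y'']) Hw.
    apply: closed_le_cont; first by apply: cont_sub => //; exact: (contc cxy cf).
    exact: cont_lag.
  move=> [[e' mu'] [[x' y'] lam']] [/= _ [_ [_ +]]].
  by move/lagr_iff; apply.
Qed.


Hypothesis convg : forall x i, convex_fun (fun y : 'rV[R]_m => g (row_mx x y) 0 i).
Hypothesis cY : compact Y.
Hypothesis A2 : [set y | exists2 x, Xset G x & forall i, g (row_mx x y) 0 i <= 0] `<=` interior Y.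
Hypothesis R1 : forall x, Xset G x -> exists y, forall i, g (row_mx x y) 0 i < 0.
Hypothesis cX : compact (Xset G).

Lemma Y_bound : exists r0, 1 <= r0 /\ forall y, Y y -> `|y| <= r0.
Proof.
case: (compact_bounded cY) => M [Mr HM].
exists (Num.max (M + 1) 1); split; first by rewrite le_max lexx orbT.
move=> y Yy; apply: (HM (Num.max (M + 1) 1)) => //.
by rewrite lt_max ltrDl ltr01.
Qed.

Lemma cphi i : continuous (fun w : 'rV[R]_n * 'rV[R]_m => g (row_mx w.1 w.2) 0 i).
Proof. by move=> w; apply: (@continuous_comp _ _ _ (fun w : 'rV[R]_n * 'rV[R]_m => row_mx w.1 w.2) (fun v => g v 0 i) w (@rowmx_cont _ _ _ w)); exact: cg. Qed.

Lemma delta_W r0 : 1 <= r0 -> (forall y, Y y -> `|y| <= r0) ->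
  exists d, 0 < d /\ forall x z, Xset G x -> 2 * r0 <= `|z| -> `|z| <= 4 * r0 ->
    exists i, d <= g (row_mx x z) 0 i.
Proof.
move=> r0ge1 Hr0.
set W := Xset G `*` [set z : 'rV[R]_m | 2 * r0 <= `|z| /\ `|z| <= 4 * r0].
have cW : compact W.
  apply: compact_setX => //; apply: bounded_closed_compact.
  - exists (4 * r0); split; first exact: num_real.
    move=> M HM z [_ Hz] /=; exact: le_trans Hz (ltW HM).
  - apply: closedI; apply: closed_le_cont; try exact: norm_continuous; exact: cont_cst.
have H := (compact_near_coveringP W).1 cW R (at_right 0)
   (fun d w => exists i, d <= g (row_mx w.1 w.2) 0 i) _.
have {H} H : \forall d \near 0^'+, W `<=` (fun w => exists i, d <= g (row_mx w.1 w.2) 0 i).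
  apply: H => -[x0 z0] [Xx0 [h1 h2]].
  have [i gi] : exists i, 0 < g (row_mx x0 z0) 0 i.
    apply: contrapT => /forallNP Hn.
    have : interior Y z0.
      apply: A2; exists x0 => // i; rewrite leNgt; exact/negP/Hn.
    move/interior_subset/Hr0 => /= hz; lra.
  set a := g (row_mx x0 z0) 0 i in gi.
  exists ([set w | a / 2 < g (row_mx w.1 w.2) 0 i], [set d : R | d < a / 2]).
    split => /=.
    - have := @cvgr_gt _ _ _ _ (fun w : 'rV[R]_n * 'rV[R]_m => g (row_mx w.1 w.2) 0 i) a (@cphi i (x0, z0)) (a / 2). apply. lra.
    - apply: nbhs_right_lt; lra.
  by move=> [w d] [/= Hw Hd]; exists i; lra.
have [d [/= d0 Hd]] := filter_ex (filterI (nbhs_right_gt 0) H).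
exists d; split => // x z Xx h1 h2; exact: (Hd (x, z)).
Qed.
Lemma y_bound E : 0 < E -> exists Ry, forall x y e, Xset G x -> e <= E ->
  (forall i, g (row_mx x y) 0 i <= e) -> `|y| <= Ry.
Proof.
move=> E0.
have [r0 [r0ge1 Hr0]] := Y_bound.
have [d [d0 Hd]] := delta_W r0ge1 Hr0.
exists (Num.max (5 * r0) (r0 + 3 * r0 * E / d)) => x y e Xx eE gy.
rewrite le_max; case: (leP `|y| (5 * r0)) => [h|hy]; [by apply/orP; left|apply/orP; right].
have [yh gyh] := R1 Xx.
have Yyh : Y yh by apply: interior_subset; apply: A2; exists x => // i; exact: ltW.
have hyh := Hr0 _ Yyh.
set D := `|y - yh|.
have hyD : `|y| <= D + `|yh| by rewrite -{1}(subrK yh y); exact: ler_normD.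
have D0 : 4 * r0 < D by lra.
set t := 3 * r0 / D.
have tD : t * D = 3 * r0 by rewrite /t divfK // gt_eqF //; lra.
have t0 : 0 <= t by rewrite /t divr_ge0 //; lra.
have t1 : t <= 1 by rewrite /t ler_pdivrMr; lra.
set z := t *: y + (1 - t) *: yh.
have zyh : z - yh = t *: (y - yh).
  rewrite /z scalerBl scale1r scalerBr.
  set u := t *: y; set v := t *: yh.
  by rewrite addrCA (addrC yh) addrK.
have nz : `|z - yh| = 3 * r0 by rewrite zyh normrZ ger0_norm.
have hz1 : 2 * r0 <= `|z|.
  have := ler_normB z yh; rewrite nz; lra.
have hz2 : `|z| <= 4 * r0.
  have : `|z| <= `|z - yh| + `|yh| by rewrite -{1}(subrK yh z); exact: ler_normD.
  rewrite nz; lra.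
have [i Hi] := Hd x z Xx hz1 hz2.
have conv := convg x i y yh (ltac:(by rewrite t0 t1) : 0 <= t <= 1).
have h1 : (1 - t) * g (row_mx x yh) 0 i <= 0.
  by apply: mulr_ge0_le0; [lra|exact: ltW].
have h2 : t * g (row_mx x y) 0 i <= t * E.
  by apply: ler_wpM2l => //; exact: le_trans (gy i) eE.
have key : d * D <= 3 * r0 * E by nra.
have : D <= 3 * r0 * E / d by rewrite ler_pdivlMr // mulrC.
lra.
Qed.
Lemma slater : exists d, 0 < d /\ forall x, Xset G x ->
  exists yh, forall i, g (row_mx x yh) 0 i <= - d.
Proof.
have H := (compact_near_coveringP (Xset G)).1 cX R (at_right 0)
   (fun d x => exists yh, forall i, g (row_mx x yh) 0 i <= - d) _.
have {H} H : \forall d \near 0^'+, Xset G `<=` (fun x => exists yh, forall i, g (row_mx x yh) 0 i <= - d).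
  apply: H => x0 Xx0.
  have [y0 gy0] := R1 Xx0.
  have crx : continuous (fun x : 'rV[R]_n => row_mx x y0).
    by apply: cont_row; [move=> ?; exact: cvg_id | exact: cst_continuous].
  have cx i : continuous (fun x => g (row_mx x y0) 0 i).
    by move=> x; apply: (@continuous_comp _ _ _ (fun x => row_mx x y0) (fun v => g v 0 i) x (crx x)); exact: cg.
  have Hi : forall i, \forall x' \near x0 & d \near 0^'+, g (row_mx x' y0) 0 i <= - d.
    move=> i; set a := g (row_mx x0 y0) 0 i.
    have ha : a < 0 := gy0 i.
    exists ([set x | g (row_mx x y0) 0 i < a / 2], [set d : R | d < - a / 2]).
      split => /=.
      - have := @cvgr_lt _ _ _ _ (fun x => g (row_mx x y0) 0 i) a (@cx i x0) (a / 2).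
        apply; lra.
      - apply: nbhs_right_lt; lra.
    move=> [x d] [/= h1 h2]; lra.
  have FF : Filter (filter_prod (nbhs x0) (0:R)^'+).
    by apply: filter_prod_filter; apply: at_right_proper_filter.
  have := @filter_forall _ _ (fun i (xd : 'rV[R]_n * R) => g (row_mx xd.1 y0) 0 i <= - xd.2) _ FF Hi.
  move=> Hall; apply: (@filterS _ _ FF _ _ _ Hall) => -[x d] /= Hx; by exists y0.
have [d [/= d0 Hd]] := filter_ex (filterI (nbhs_right_gt 0) H).
by exists d; split.
Qed.
Lemma cont_sqnorm_snd (T : topologicalType) N (u : T -> 'rV[R]_N) :
  continuous u -> continuous (fun t => sqnorm (u t)).
Proof.
move=> cu; rewrite /sqnorm /dotv; apply: cont_sum => j.
by apply: cont_mul; exact: cont_coord.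
Qed.

Lemma lam_bound E : 0 < E -> exists Ry Rl, forall e mu x y lam, e <= E -> mu <= 1 ->
  Cset f g G Y e mu ((x, y), lam) -> `|y| <= Ry /\ forall i, lam 0 i <= Rl.
Proof.
move=> E0.
have [Ry HRy] := y_bound E0.
have [d [d0 Hd]] := slater.
have cfw : continuous (fun w : 'rV[R]_n * 'rV[R]_m => f (row_mx w.1 w.2)).
  exact: (contc (@rowmx_cont _ _ _) cf).
have [B1 HB1] := @cont_bound _ _ (Xset G `*` Y) (fun w => sqnorm w.2 + f (row_mx w.1 w.2))
  (compact_setX cX cY) (cont_add (cont_sqnorm_snd (@cont_snd _ _)) cfw).
have cB : compact [set y : 'rV[R]_m | `|y| <= Ry].
  apply: bounded_closed_compact.
  - exists Ry; split; first exact: num_real.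
    move=> M HM z /= Hz; exact: le_trans Hz (ltW HM).
  - apply: closed_le_cont; [exact: norm_continuous|exact: cont_cst].
have [B2 HB2] := @cont_bound _ _ (Xset G `*` [set y | `|y| <= Ry]) (fun w => 0 - f (row_mx w.1 w.2))
  (compact_setX cX cB) (cont_sub (@cont_cst _ _ 0) cfw).
exists Ry, ((B1 + B2 + E) / d) => e mu x y lam eE mu1 [Xx [gy [lam0 lg]]].
have yR := HRy x y e Xx eE gy; split => // i.
have [yh gyh] := Hd x Xx.
have Yyh : Y yh.
  apply: interior_subset; apply: A2; exists x => // j.
  by apply: le_trans (gyh j) _; rewrite oppr_le0 ltW.
move/lagr_iff : lg => /(_ yh Yyh); rewrite /lag => lg.
have hs0 := sqnorm_ge0 yh.
have hs : mu * sqnorm yh <= sqnorm yh by nra.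
have hd : dotv lam (g (row_mx x yh)) <= - d * \sum_j lam 0 j.
  rewrite /dotv mulr_sumr; apply: ler_sum => j _.
  have := ler_wpM2l (lam0 j) (gyh j); lra.
have hsum : lam 0 i <= \sum_j lam 0 j.
  by rewrite (bigD1 i) //= lerDl sumr_ge0.
have h1 := HB1 (x, yh) (conj Xx Yyh).
have h2 := HB2 (x, y) (conj Xx yR).
simpl in h1, h2.
rewrite ler_pdivlMr //; nra.
Qed.
Lemma key (epsbar : R) (eps mu : nat -> R) (pt : nat -> dbpt R n m p) (S : set (dbpt R n m p)) :
  0 <= epsbar ->
  (forall k, epsbar < eps k) -> eps k @[k --> \oo] --> epsbar ->
  (forall k, 0 < mu k) -> mu k @[k --> \oo] --> 0 ->
  (forall k, Cset f g G Y (eps k) (mu k) (pt k)) ->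
  closed S -> ~ (exists P, S P /\ Cset f g G Y epsbar 0 P) ->
  \forall k \near \oo, ~ S (pt k).
Proof.
move=> eb0 he ce hmu cmu hC cS nS.
have E0 : 0 < epsbar + 1 by lra.
have [Ry [Rl HB]] := lam_bound E0.
have cB : compact [set y : 'rV[R]_m | `|y| <= Ry].
  apply: bounded_closed_compact.
  - exists Ry; split; first exact: num_real.
    move=> M HM z /= Hz; exact: le_trans Hz (ltW HM).
  - apply: closed_le_cont; [exact: norm_continuous|exact: cont_cst].
set K := (Xset G `*` [set y : 'rV[R]_m | `|y| <= Ry]) `*`
   [set v : 'rV[R]_p | forall i, (`[0, Rl]%classic : set R) (v ord0 i)].
have cK : compact K.
  apply: compact_setX; first exact: compact_setX.
  apply: (@rV_compact _ _ (fun _ => (`[0, Rl]%classic : set R))) => i; exact: segment_compact.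
set Bp := (`[epsbar - 1, epsbar + 1]%classic : set R) `*` (`[-1, 1]%classic : set R).
have cBp : compact Bp by apply: compact_setX; exact: segment_compact.
set A := ((Bp `*` K) `&` Gr) `&` [set w | S w.2].
have cA : compact A.
  apply: compact_closedI; first apply: compact_closedI.
  - exact: compact_setX.
  - exact: Gr_closed.
  - apply: preimage_closed => //; move=> w _; exact: cvg_snd.
set PA := fst @` A.
have cPA : closed PA.
  apply: compact_closed; first exact: norm_hausdorff.
  apply: continuous_compact => //; apply: continuous_subspaceT; exact: cont_fst.
have nPA : ~ PA (epsbar, 0).
  move=> [[[e mu'] P] [[_ HG] HS] /= [He Hmu]]; subst e mu'.
  by apply: nS; exists P.
have H1 : \forall k \near \oo, ~ PA (eps k, mu k).
  have cv : (eps k, mu k) @[k --> \oo] --> (epsbar, 0) by exact: (cvg_pair ce cmu).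
  have hn : nbhs (epsbar, 0) (~` PA) by apply: open_nbhs_nbhs; split; [exact: closed_openC | exact: nPA].
  exact: (cv _ hn).
have H2 : \forall k \near \oo, eps k < epsbar + 1.
  by apply: (cvgr_lt epsbar ce); lra.
have H3 : \forall k \near \oo, mu k < 1.
  by apply: (cvgr_lt 0 cmu); lra.
apply: filterS (filterI H1 (filterI H2 H3)) => k [h1 [h2 h3]] Sk.
apply: h1; exists ((eps k, mu k), pt k) => //.
case Hp : (pt k) => [[x y] lam].
have hCk := hC k; rewrite Hp in hCk Sk.
have [hy hl] := HB _ _ _ _ _ (ltW h2) (ltW h3) hCk.
case: hCk => Xx [_ [lam0 _]].
have i1 : eps k \in `[epsbar - 1, epsbar + 1].
  rewrite in_itv /=; apply/andP; split; last exact: ltW.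
  have := he k; lra.
have i2 : mu k \in `[-1, 1].
  rewrite in_itv /=; apply/andP; split; last exact: ltW.
  have := hmu k; lra.
have i3 : forall i, lam ord0 i \in `[0, Rl].
  by move=> i; rewrite in_itv /=; apply/andP; split; [exact: lam0|exact: hl].
split; [split; [split|]|] => //=.
by move: (hC k); rewrite Hp.
Qed.
Lemma Cset_mono epsbar e mu Q : epsbar <= e -> 0 <= mu ->
  Cset f g G Y epsbar 0 Q -> Cset f g G Y e mu Q.
Proof.
move=> he hmu; case: Q => [[x y] lam] [Xx [gy [l0 lg]]].
split => //; split; first by move=> i; exact: le_trans (gy i) he.
split => //; apply/lagr_iff => y' Yy'.
move/lagr_iff : lg => /(_ y' Yy'); rewrite /lag.
have := sqnorm_ge0 y'; move=> hs; rewrite mul0r add0r => h.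
have : 0 <= mu * sqnorm y' by apply: mulr_ge0.
lra.
Qed.

Lemma inf_mono epsbar e mu : epsbar <= e -> 0 <= mu ->
  (dbp_inf F f g G Y e mu <= dbp_inf F f g G Y epsbar 0)%E.
Proof.
move=> he hmu; apply: le_ereal_inf => _ [Q HQ <-]; exists Q => //.
move: HQ; apply: Cset_mono => //.
Qed.

Lemma FvalE : @Fval R n m p F = fun Q : dbpt R n m p => F (row_mx Q.1.1 Q.1.2).
Proof. by apply/funext => -[[x y] l]. Qed.

Lemma cFval : continuous (@Fval R n m p F).
Proof.
rewrite FvalE; apply: (contc _ cF); apply: cont_row.
- exact: (contc (@cont_fst _ _) (@cont_fst _ _)).
- exact: (contc (@cont_fst _ _) (@cont_snd _ _)).
Qed.

Lemma main_res (epsbar : R) : 0 <= epsbar ->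
  (forall (eps mu z : nat -> R) (pt : nat -> dbpt R n m p) (P : dbpt R n m p),
     (forall k, epsbar < eps k) -> eps k @[k --> \oo] --> epsbar ->
     (forall k, 0 < mu k) -> mu k @[k --> \oo] --> 0 ->
     (forall k, 0 < z k) -> z k @[k --> \oo] --> 0 ->
     (forall k, dbp_zargmin F f g G Y (eps k) (mu k) (z k) (pt k)) ->
     pt k @[k --> \oo] --> P ->
     dbp_argmin F f g G Y epsbar 0 P)
  /\
  (forall (eps mu z : nat -> R) (pt : nat -> dbpt R n m p),
     (forall k, epsbar < eps k) -> eps k @[k --> \oo] --> epsbar ->
     (forall k, 0 < mu k) -> mu k @[k --> \oo] --> 0 ->
     (forall k, 0 < z k) -> z k @[k --> \oo] --> 0 ->
     (forall k, dbp_zargmin F f g G Y (eps k) (mu k) (z k) (pt k)) ->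
     (Fval F (pt k))%:E @[k --> \oo] --> dbp_inf F f g G Y epsbar 0).
Proof.
move=> eb0.
have upG : forall (eps mu z : nat -> R) (pt : nat -> dbpt R n m p),
    (forall k, epsbar < eps k) -> (forall k, 0 < mu k) ->
    (forall k, dbp_zargmin F f g G Y (eps k) (mu k) (z k) (pt k)) ->
    forall k, ((Fval F (pt k))%:E <= dbp_inf F f g G Y epsbar 0 + (z k)%:E)%E.
  move=> eps mu z pt he hmu hpt k.
  apply: le_trans (hpt k).2 _; apply: leeD2r.
  by apply: inf_mono; [exact: ltW|exact: ltW].
split.
- move=> eps mu z pt P he ce hmu cmu hz cz hpt cpt.
  have hC k : Cset f g G Y (eps k) (mu k) (pt k) := (hpt k).1.
  have up := upG _ _ _ _ he hmu hpt.
  have GrP : Gr ((epsbar, 0), P).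
    apply: (@closed_cvg _ _ \oo _ (fun k => ((eps k, mu k), pt k)) Gr Gr_closed).
      by apply: nearW => k; exact: hC.
    exact: (cvg_pair (cvg_pair ce cmu) cpt).
  split => //.
  apply/eqP; rewrite eq_le; apply/andP; split; last first.
    by apply: ereal_inf_lbound; exists P.
  case EL : (dbp_inf F f g G Y epsbar 0) => [r| |].
  + rewrite lee_fin.
    have hk : forall k, Fval F (pt k) - z k <= r.
      by move=> k; have := up k; rewrite EL -EFinD lee_fin; lra.
    have cv1 : (Fval F (pt k)) @[k --> \oo] --> Fval F P.
      exact: (continuous_cvg _ (@cFval P) cpt).
    have cv2 : (Fval F (pt k) - z k) @[k --> \oo] --> Fval F P - 0 := cvgB cv1 cz.
    rewrite subr0 in cv2.
    have cl : closed [set v : R | v <= r].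
      by apply: closed_le_cont; [move=> ?; exact: cvg_id|exact: cont_cst].
    have := @closed_cvg _ _ \oo _ (fun k => Fval F (pt k) - z k) [set v : R | v <= r] cl.
    apply; last exact: cv2. near=> k. exact: hk. Unshelve. all: end_near.
  + by rewrite leey.
  + by have := up 0%N; rewrite EL addNye leeNy_eq.
- move=> eps mu z pt he ce hmu cmu hz cz hpt.
  have hC k : Cset f g G Y (eps k) (mu k) (pt k) := (hpt k).1.
  have up := upG _ _ _ _ he hmu hpt.
  have [P0 HP0] : exists P0, Cset f g G Y epsbar 0 P0.
    apply: contrapT => nex.
    have := @key epsbar eps mu pt setT eb0 he ce hmu cmu hC closedT.
    have nS : ~ (exists P, setT P /\ Cset f g G Y epsbar 0 P) by move=> [P [_ HP]]; apply: nex; exists P.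
    by move=> /(_ nS) /filter_ex [k /=]; apply.
  have LP0 : (dbp_inf F f g G Y epsbar 0 <= (Fval F P0)%:E)%E by apply: ereal_inf_lbound; exists P0.
  case EL : (dbp_inf F f g G Y epsbar 0) => [r| |].
  + apply/fine_cvgP; split; first by apply: nearW.
    apply/cvgrPdist_lt => e e0.
    have lo := @key epsbar eps mu pt [set Q | Fval F Q <= r - e / 2] eb0 he ce hmu cmu hC
      (closed_le_cont cFval (@cont_cst _ _ (r - e / 2))).
    have nS : ~ (exists P, [set Q | Fval F Q <= r - e / 2] P /\ Cset f g G Y epsbar 0 P).
      move=> [P [/= HP HC]].
      have : (dbp_inf F f g G Y epsbar 0 <= (Fval F P)%:E)%E by apply: ereal_inf_lbound; exists P.
      rewrite EL lee_fin; lra.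
    have zs : \forall k \near \oo, z k < e / 2 by apply: (cvgr_lt 0 cz); lra.
    apply: filterS (filterI (lo nS) zs) => k [/= h1 h2].
    have h1' : r - e / 2 < Fval F (pt k) by rewrite ltNge; apply/negP.
    have := up k; rewrite EL -EFinD lee_fin => h3.
    rewrite ltr_norml; apply/andP; split; lra.
  + by move: LP0; rewrite EL leye_eq.
  + by have := up 0%N; rewrite EL addNye leeNy_eq.
Qed.
End Main.

Unset Implicit Arguments.

Theorem corollary4 (R : realType) (n m p q : nat)
  (F f : 'rV[R]_(n + m) -> R) (g : 'rV[R]_(n + m) -> 'rV[R]_p)
  (G : 'rV[R]_n -> 'rV[R]_q) (Y : set 'rV[R]_m) (epsbar : R) :
  (* (A1) *)
  (forall x : 'rV[R]_n, convex_fun (fun y : 'rV[R]_m => f (row_mx x y))) ->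
  (forall (x : 'rV[R]_n) (i : 'I_p), convex_fun (fun y : 'rV[R]_m => g (row_mx x y) 0 i)) ->
  C2 f -> C2vec g ->
  (* (A2) *)
  compact Y -> convex_set Y ->
  [set y | exists2 x, Xset G x & forall i : 'I_p, g (row_mx x y) 0 i <= 0] `<=` interior Y ->
  (* (A3) *)
  C2 F -> C2vec G ->
  (* (R1) *)
  (forall x, Xset G x -> exists y : 'rV[R]_m, forall i : 'I_p, g (row_mx x y) 0 i < 0) ->
  (* (R2) *)
  compact (Xset G) -> Xset G !=set0 -> (forall x, Xset G x -> MFCQ G x) ->
  0 <= epsbar ->
  (* limsup of z-argmin DBP(eps,mu) is contained in argmin DBP(epsbar,0) *)
  (forall (eps mu z : nat -> R) (pt : nat -> dbpt R n m p) (P : dbpt R n m p),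
     (forall k, epsbar < eps k) -> eps k @[k --> \oo] --> epsbar ->
     (forall k, 0 < mu k) -> mu k @[k --> \oo] --> 0 ->
     (forall k, 0 < z k) -> z k @[k --> \oo] --> 0 ->
     (forall k, dbp_zargmin F f g G Y (eps k) (mu k) (z k) (pt k)) ->
     pt k @[k --> \oo] --> P ->
     dbp_argmin F f g G Y epsbar 0 P)
  /\
  (* z-min DBP(eps,mu) converges to min DBP(epsbar,0) *)
  (forall (eps mu z : nat -> R) (pt : nat -> dbpt R n m p),
     (forall k, epsbar < eps k) -> eps k @[k --> \oo] --> epsbar ->
     (forall k, 0 < mu k) -> mu k @[k --> \oo] --> 0 ->
     (forall k, 0 < z k) -> z k @[k --> \oo] --> 0 ->
     (forall k, dbp_zargmin F f g G Y (eps k) (mu k) (z k) (pt k)) ->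
     (Fval F (pt k))%:E @[k --> \oo] --> dbp_inf F f g G Y epsbar 0).
Proof.
move=> convf convg Cf Cg cY convY A2 CF CG R1 cX X0 MF eps0.
exact: (main_res CF.1 Cf.1 (fun i => (Cg i).1) (fun i => (CG i).1) convg cY A2 R1 cX eps0).
Qed.
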